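(* Let $H$, $\mathcal{R}$, $A$, $\mathcal{Q}$ be as in the context ($H$ factorisable). The formulas \[(h\otimes1)\triangleright a=\langle Sh,a_{(1)}\rangle a_{(2)}-1\langle Sh,a\rangle,\qquad (1\otimes g)\triangleright a=a_{(1)}\langle g,a_{(2)}\rangle-1\langle g,a\rangle,\qquad h,g\in H,\ a\in\ker\epsilon\subset A,\] define an action of the algebra $H\otimes H$ on $\ker\epsilon\subset A$, and its pull-back along the algebra isomorphism $\theta:H\bowtie A^{\rm op}\to H\otimes H$, \[\theta(h\otimes a)=h_{(1)}\mathcal{R}^{-(2)}\otimes h_{(2)}\mathcal{R}^{(1)}\,\langle\mathcal{R}^{-(1)}\mathcal{R}^{(2)},a\rangle,\] is the action of $H\bowtie A^{\rm op}$ on $\ker\epsilon\subset A$ given by $h\triangleright a=a_{(2)}\langle h,(Sa_{(1)})a_{(3)}\rangle$ and $b\triangleright a=\langle b,\mathcal{R}'^{(1)}\mathcal{R}^{(2)}\rangle\langle a_{(1)},\mathcal{R}'^{(2)}\rangle\langle a_{(3)},\mathcal{R}^{(1)}\rangle a_{(2)}-\langle b,\mathcal{Q}(a)\rangle1$.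
   Context: $H$ is a quasitriangular Hopf algebra over $\mathbb{C}$ with $\mathcal{R}=\mathcal{R}^{(1)}\otimes\mathcal{R}^{(2)}\in H\otimes H$ ($(\Delta\otimes{\rm id})\mathcal{R}=\mathcal{R}_{13}\mathcal{R}_{23}$, $({\rm id}\otimes\Delta)\mathcal{R}=\mathcal{R}_{13}\mathcal{R}_{12}$, $\Delta^{\rm op}=\mathcal{R}\Delta\mathcal{R}^{-1}$), $\mathcal{R}^{-1}=\mathcal{R}^{-(1)}\otimes\mathcal{R}^{-(2)}$, $\mathcal{R}'$ a second copy of $\mathcal{R}$. $A$ is a Hopf algebra non-degenerately paired with $H$ (Hopf pairing $\langle hg,a\rangle=\langle h,a_{(1)}\rangle\langle g,a_{(2)}\rangle$, $\langle h,ab\rangle=\langle h_{(1)},a\rangle\langle h_{(2)},b\rangle$). $\mathcal{Q}(a)=(a\otimes{\rm id})(\mathcal{R}_{21}\mathcal{R})$, and factorisable means $\mathcal{Q}:A\to H$ is bijective; in this case $\theta$ is an isomorphism of algebras onto $H\otimes H$ (tensor product algebra). The quantum double $H\bowtie A^{\rm op}$ is $H\otimes A$ with product $(h\otimes a)(g\otimes b)=hg_{(2)}\otimes ba_{(2)}\langle g_{(1)},a_{(1)}\rangle\langle g_{(3)},Sa_{(3)}\rangle$. *)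

(* Defs.v *)
(* Hopf-algebraic data encoded via Sweedler-style finite sums,
   with equality in tensor products tested against all multilinear forms. *)
From HB Require Import structures.
From mathcomp Require Import all_boot all_order all_algebra.
From mathcomp Require Import complex Rstruct.
Set Implicit Arguments. Unset Strict Implicit. Unset Printing Implicit Defensive.
Import GRing.Theory Num.Theory.
Local Open Scope ring_scope.

Definition CC : fieldType := complex Rdefinitions.R.

Section Tensors.
Variable K : fieldType.

(* An element of U (x) V is represented by a finite list of simple tensors
   sum_i u_i (x) v_i.  Two representatives are equal in U (x) V iff every
   K-bilinear form takes the same value on them (K a field). *)
Definition bilinear_form (U V : lmodType K) (f : U -> V -> K) : Prop :=
  (forall (a : K) u u' v, f (a *: u + u') v = a * f u v + f u' v) /\
  (forall (a : K) u v v', f u (a *: v + v') = a * f u v + f u v').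

Definition teq (U V : lmodType K) (t1 t2 : seq (U * V)) : Prop :=
  forall f : U -> V -> K, bilinear_form f ->
    \sum_(p <- t1) f p.1 p.2 = \sum_(p <- t2) f p.1 p.2.

Definition trilinear_form (U V W : lmodType K) (f : U -> V -> W -> K) : Prop :=
  (forall (a : K) u u' v w, f (a *: u + u') v w = a * f u v w + f u' v w) /\
  (forall (a : K) u v v' w, f u (a *: v + v') w = a * f u v w + f u v' w) /\
  (forall (a : K) u v w w', f u v (a *: w + w') = a * f u v w + f u v w').

Definition teq3 (U V W : lmodType K) (t1 t2 : seq (U * V * W)) : Prop :=
  forall f : U -> V -> W -> K, trilinear_form f ->
    \sum_(p <- t1) f p.1.1 p.1.2 p.2 = \sum_(p <- t2) f p.1.1 p.1.2 p.2.

Definition tmul (H : algType K) (t t' : seq (H * H)) : seq (H * H) :=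
  [seq (x.1 * y.1, x.2 * y.2) | x <- t, y <- t'].

Record is_hopf (H : algType K) (D : H -> seq (H * H)) (e : H -> K) (S : H -> H)
  : Prop := {
  hopf_D_lin : forall (a : K) h g,
    teq (D (a *: h + g)) ([seq (a *: p.1, p.2) | p <- D h] ++ D g);
  hopf_D_mul : forall h g, teq (D (h * g)) (tmul (D h) (D g));
  hopf_D_one : teq (D 1) [:: (1, 1)];
  hopf_coass : forall h,
    teq3 [seq (q.1, q.2, p.2) | p <- D h, q <- D p.1]
         [seq (p.1, q.1, q.2) | p <- D h, q <- D p.2];
  hopf_e_lin : forall (a : K) h g, e (a *: h + g) = a * e h + e g;
  hopf_e_mul : forall h g, e (h * g) = e h * e g;
  hopf_e_one : e 1 = 1;
  hopf_counitL : forall h, \sum_(p <- D h) e p.1 *: p.2 = h;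
  hopf_counitR : forall h, \sum_(p <- D h) e p.2 *: p.1 = h;
  hopf_S_lin : forall (a : K) h g, S (a *: h + g) = a *: S h + S g;
  hopf_antipodeL : forall h, \sum_(p <- D h) S p.1 * p.2 = e h *: 1;
  hopf_antipodeR : forall h, \sum_(p <- D h) p.1 * S p.2 = e h *: 1
}.

Record is_hopf_pairing (H A : algType K)
  (DH : H -> seq (H * H)) (eH : H -> K) (DA : A -> seq (A * A)) (eA : A -> K)
  (pr : H -> A -> K) : Prop := {
  pair_bilin : bilinear_form pr;
  pair_mulH : forall h g a, pr (h * g) a = \sum_(p <- DA a) pr h p.1 * pr g p.2;
  pair_mulA : forall h a b, pr h (a * b) = \sum_(p <- DH h) pr p.1 a * pr p.2 b;
  pair_oneH : forall a, pr 1 a = eA a;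
  pair_oneA : forall h, pr h 1 = eH h
}.

Definition pairing_nondegenerate (H A : algType K) (pr : H -> A -> K) : Prop :=
  (forall h, (forall a, pr h a = 0) -> h = 0) /\
  (forall a, (forall h, pr h a = 0) -> a = 0).

Record is_quasitriangular (H : algType K) (DH : H -> seq (H * H))
  (R Rinv : seq (H * H)) : Prop := {
  qt_inv_l : teq (tmul R Rinv) [:: (1, 1)];
  qt_inv_r : teq (tmul Rinv R) [:: (1, 1)];
  (* (Delta (x) id) R = R13 R23 *)
  qt_DL : teq3 [seq (q.1, q.2, r.2) | r <- R, q <- DH r.1]
               [seq (r.1, s.1, r.2 * s.2) | r <- R, s <- R];
  (* (id (x) Delta) R = R13 R12 *)
  qt_DR : teq3 [seq (r.1, q.1, q.2) | r <- R, q <- DH r.2]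
               [seq (r.1 * s.1, s.2, r.2) | r <- R, s <- R];
  (* Delta^op = R Delta R^{-1} *)
  qt_Dop : forall h, teq [seq (p.2, p.1) | p <- DH h]
     [seq (x.1.1 * x.2.1 * s.1, x.1.2 * x.2.2 * s.2)
        | x <- [seq (r, p) | r <- R, p <- DH h], s <- Rinv]
}.

Section Maps.
Variables (H A : algType K).
Variables (DH : H -> seq (H * H)) (SH : H -> H).
Variables (DA : A -> seq (A * A)) (SA : A -> A).
Variable pr : H -> A -> K.
Variables (R Rinv : seq (H * H)).

(* Q(a) = (a (x) id)(R21 R) *)
Definition Qmap (a : A) : H :=
  \sum_(p <- [seq (r.2 * s.1, r.1 * s.2) | r <- R, s <- R]) pr p.1 a *: p.2.

(* a_(1) (x) a_(2) (x) a_(3) *)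
Definition cop3 (a : A) : seq (A * A * A) :=
  [seq (q.1, q.2, p.2) | p <- DA a, q <- DA p.1].

Definition actL (h : H) (a : A) : A :=
  \sum_(p <- DA a) pr (SH h) p.1 *: p.2 - pr (SH h) a *: 1.

Definition actR (g : H) (a : A) : A :=
  \sum_(p <- DA a) pr g p.2 *: p.1 - pr g a *: 1.

Definition actHH (t : seq (H * H)) (a : A) : A :=
  \sum_(p <- t) actL p.1 (actR p.2 a).

(* theta_map(h (x) b) = h_(1) R^{-(2)} (x) h_(2) R^(1) <R^{-(1)} R^(2), b> *)
Definition theta_map (h : H) (b : A) : seq (H * H) :=
  [seq (pr (x.2.1 * s.2) b *: (x.1.1 * x.2.2), x.1.2 * s.1)
     | x <- [seq (p, r) | p <- DH h, r <- Rinv], s <- R].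

Definition hact (h : H) (a : A) : A :=
  \sum_(t <- cop3 a) pr h (SA t.1.1 * t.2) *: t.1.2.

(* b |> a = <b, R'^(1) R^(2)> <a_(1), R'^(2)> <a_(3), R^(1)> a_(2) - <b, Q(a)> 1 *)
Definition bact (b : A) (a : A) : A :=
  \sum_(r' <- R) \sum_(s <- R) \sum_(t <- cop3 a)
     (pr (r'.1 * s.2) b * pr r'.2 t.1.1 * pr s.1 t.2) *: t.1.2
  - pr (Qmap a) b *: 1.

End Maps.
End Tensors.

(* Main.v *)
Require Import Defs.
From HB Require Import structures.
From mathcomp Require Import all_boot all_order all_algebra.
From mathcomp Require Import complex Rstruct.
From mathcomp Require Import ring.
Import GRing.Theory Num.Theory.
Local Open Scope ring_scope.

Set Implicit Arguments. Unset Strict Implicit. Unset Printing Implicit Defensive.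


Section Lin.
Variable K : fieldType.

Definition slin (U : lmodType K) (f : U -> K) :=
  forall c x y, f (c *: x + y) = c * f x + f y.
Definition vlin (U W : lmodType K) (f : U -> W) :=
  forall c x y, f (c *: x + y) = c *: f x + f y.

Section S.
Variables (U : lmodType K) (f : U -> K) (hf : slin f).
Lemma slin0 : f 0 = 0.
Proof. by have := hf 1 0 0; rewrite scale1r addr0 mul1r => /(congr1 (fun z => z - f 0)); rewrite subrr addrK. Qed.
Lemma slinD x y : f (x + y) = f x + f y.
Proof. by rewrite -[x]scale1r hf scale1r mul1r. Qed.
Lemma slinZ c x : f (c *: x) = c * f x.
Proof. by rewrite -[c *: x]addr0 hf slin0 addr0. Qed.
Lemma slinN x : f (- x) = - f x.
Proof. by rewrite -scaleN1r slinZ mulN1r. Qed.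
Lemma slinB x y : f (x - y) = f x - f y.
Proof. by rewrite slinD slinN. Qed.
Lemma slin_sum I (s : seq I) (F : I -> U) :
  f (\sum_(i <- s) F i) = \sum_(i <- s) f (F i).
Proof.
elim: s => [|i s IH]; first by rewrite !big_nil slin0.
by rewrite !big_cons slinD IH.
Qed.
End S.

Section V.
Variables (U W : lmodType K) (f : U -> W) (hf : vlin f).
Lemma vlin0 : f 0 = 0.
Proof. by have := hf 1 0 0; rewrite scale1r addr0 scale1r => /(congr1 (fun z => z - f 0)); rewrite subrr addrK. Qed.
Lemma vlinD x y : f (x + y) = f x + f y.
Proof. by rewrite -[x]scale1r hf !scale1r. Qed.
Lemma vlinZ c x : f (c *: x) = c *: f x.
Proof. by rewrite -[c *: x]addr0 hf vlin0 addr0. Qed.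
Lemma vlinN x : f (- x) = - f x.
Proof. by rewrite -scaleN1r vlinZ scaleN1r. Qed.
Lemma vlinB x y : f (x - y) = f x - f y.
Proof. by rewrite vlinD vlinN. Qed.
Lemma vlin_sum I (s : seq I) (F : I -> U) :
  f (\sum_(i <- s) F i) = \sum_(i <- s) f (F i).
Proof.
elim: s => [|i s IH]; first by rewrite !big_nil vlin0.
by rewrite !big_cons vlinD IH.
Qed.
End V.

Lemma bilinP (U V : lmodType K) (f : U -> V -> K) :
  (forall v, slin (fun u => f u v)) -> (forall u, slin (f u)) -> bilinear_form f.
Proof. by move=> h1 h2; split=> *; [apply: h1 | apply: h2]. Qed.

Lemma trilinP (U V W : lmodType K) (f : U -> V -> W -> K) :
  (forall v w, slin (fun u => f u v w)) -> (forall u w, slin (fun v => f u v w)) ->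
  (forall u v, slin (f u v)) -> trilinear_form f.
Proof. by move=> h1 h2 h3; split; [|split]=> *; [apply: h1|apply: h2|apply: h3]. Qed.

Lemma slin_sumF (U : lmodType K) I (s : seq I) (F : I -> U -> K) :
  (forall i, slin (F i)) -> slin (fun x => \sum_(i <- s) F i x).
Proof.
move=> h c x y; rewrite mulr_sumr -big_split; apply: eq_bigr => i _; exact: h.
Qed.
Lemma slin_mull (U : lmodType K) (f : U -> K) k : slin f -> slin (fun x => f x * k).
Proof. by move=> h c x y; rewrite h mulrDl mulrA. Qed.
Lemma slin_mulr (U : lmodType K) (f : U -> K) k : slin f -> slin (fun x => k * f x).
Proof. by move=> h c x y; rewrite h mulrDr !mulrA [k * c]mulrC. Qed.
Lemma slin_comp (U W : lmodType K) (f : U -> W) (g : W -> K) :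
  vlin f -> slin g -> slin (fun x => g (f x)).
Proof. by move=> hf hg c x y; rewrite hf hg. Qed.
Lemma slin_add (U : lmodType K) (f g : U -> K) : slin f -> slin g -> slin (fun x => f x + g x).
Proof. by move=> hf hg c x y; rewrite hf hg; ring. Qed.
Lemma slin_sub (U : lmodType K) (f g : U -> K) : slin f -> slin g -> slin (fun x => f x - g x).
Proof. by move=> hf hg c x y; rewrite hf hg; ring. Qed.
Lemma vlin_comp (U V W : lmodType K) (f : U -> V) (g : V -> W) :
  vlin f -> vlin g -> vlin (fun x => g (f x)).
Proof. by move=> hf hg c x y; rewrite hf hg. Qed.
Lemma vlin_mull (H : algType K) (k : H) : vlin (fun x : H => x * k).
Proof. by move=> c x y; rewrite mulrDl scalerAl. Qed.
Lemma vlin_mulr (H : algType K) (k : H) : vlin (fun x : H => k * x).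
Proof. by move=> c x y; rewrite mulrDr scalerAr. Qed.
Lemma vlin_id (U : lmodType K) : vlin (fun x : U => x).
Proof. by []. Qed.

Lemma teq_sep (W : lmodType K) (P : (W -> K) -> Prop)
  (linP : forall g, P g -> slin g)
  (sepP : forall w, (forall g, P g -> g w = 0) -> w = 0)
  (U V : lmodType K) (F : U -> V -> W)
  (F1 : forall v, vlin (fun u => F u v)) (F2 : forall u, vlin (F u)) t1 t2 :
  teq t1 t2 -> \sum_(p <- t1) F p.1 p.2 = \sum_(p <- t2) F p.1 p.2.
Proof.
move=> e; apply/eqP; rewrite -subr_eq0; apply/eqP/sepP => g Pg.
rewrite (slinB (linP _ Pg)) !(slin_sum (linP _ Pg)).
apply/eqP; rewrite subr_eq0; apply/eqP.
apply: (e (fun u v => g (F u v))); apply: bilinP => [v|u].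
- by apply: slin_comp (F1 v) (linP _ Pg).
- by apply: slin_comp (F2 u) (linP _ Pg).
Qed.

Lemma teq3_sep (W : lmodType K) (P : (W -> K) -> Prop)
  (linP : forall g, P g -> slin g)
  (sepP : forall w, (forall g, P g -> g w = 0) -> w = 0)
  (U V X : lmodType K) (F : U -> V -> X -> W)
  (F1 : forall v w, vlin (fun u => F u v w)) (F2 : forall u w, vlin (fun v => F u v w))
  (F3 : forall u v, vlin (F u v)) t1 t2 :
  teq3 t1 t2 -> \sum_(p <- t1) F p.1.1 p.1.2 p.2 = \sum_(p <- t2) F p.1.1 p.1.2 p.2.
Proof.
move=> e; apply/eqP; rewrite -subr_eq0; apply/eqP/sepP => g Pg.
rewrite (slinB (linP _ Pg)) !(slin_sum (linP _ Pg)).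
apply/eqP; rewrite subr_eq0; apply/eqP.
apply: (e (fun u v w => g (F u v w))); apply: trilinP => *;
  apply: slin_comp (linP _ Pg); [exact: F1|exact: F2|exact: F3].
Qed.

End Lin.


Section Clos.
Variable K : fieldType.
Lemma vlin_sumF (U W : lmodType K) I (s : seq I) (F : I -> U -> W) :
  (forall i, vlin (F i)) -> vlin (fun x => \sum_(i <- s) F i x).
Proof. move=> h c x y; rewrite scaler_sumr -big_split; apply: eq_bigr => i _; exact: h. Qed.
Lemma vlin_mulL (H : algType K) (U : lmodType K) (f : U -> H) k :
  vlin f -> vlin (fun x => f x * k).
Proof. by move=> h c x y; rewrite h mulrDl scalerAl. Qed.
Lemma vlin_mulR (H : algType K) (U : lmodType K) (f : U -> H) k :
  vlin f -> vlin (fun x => k * f x).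
Proof. by move=> h c x y; rewrite h mulrDr scalerAr. Qed.
Lemma vlin_scl (U W : lmodType K) (g : U -> K) (w : W) :
  slin g -> vlin (fun x => g x *: w).
Proof. by move=> h c x y; rewrite h scalerDl scalerA. Qed.
Lemma vlin_sclv (U W : lmodType K) (f : U -> W) (k : K) :
  vlin f -> vlin (fun x => k *: f x).
Proof. by move=> h c x y; rewrite h scalerDr !scalerA mulrC. Qed.
Lemma vlin_addF (U W : lmodType K) (f g : U -> W) :
  vlin f -> vlin g -> vlin (fun x => f x + g x).
Proof. by move=> hf hg c x y; rewrite hf hg scalerDr addrACA. Qed.
Lemma vlin_subF (U W : lmodType K) (f g : U -> W) :
  vlin f -> vlin g -> vlin (fun x => f x - g x).
Proof. by move=> hf hg c x y; rewrite hf hg scalerDr opprD scalerN addrACA. Qed.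
Lemma slin_id : slin (fun x : K^o => x).
Proof. by []. Qed.
Lemma slin_compF (U W : lmodType K) (f : U -> W) (g : W -> K) :
  slin g -> vlin f -> slin (fun x => g (f x)).
Proof. by move=> hg hf c x y; rewrite hf hg. Qed.
Lemma vlin_compF (U V W : lmodType K) (f : U -> V) (g : V -> W) :
  vlin g -> vlin f -> vlin (fun x => g (f x)).
Proof. by move=> hg hf c x y; rewrite hf hg. Qed.
End Clos.


Section Main.
Variable K : fieldType.
Variables (H A : algType K).
Variables (DH : H -> seq (H * H)) (eH : H -> K) (SH : H -> H).
Variables (DA : A -> seq (A * A)) (eA : A -> K) (SA : A -> A).
Variables (pr : H -> A -> K) (R Rinv : seq (H * H)).
Hypotheses (hopfH : is_hopf DH eH SH) (hopfA : is_hopf DA eA SA)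
  (hpair : is_hopf_pairing DH eH DA eA pr) (nondeg : pairing_nondegenerate pr)
  (qtri : is_quasitriangular DH R Rinv).

Lemma pr1lin a : slin (fun h => pr h a).
Proof. by move=> c x y; case: (pair_bilin hpair) => h1 _; apply: h1. Qed.
Lemma pr2lin h : slin (pr h).
Proof. by move=> c x y; case: (pair_bilin hpair) => _ h2; apply: h2. Qed.
Lemma eHlin : slin eH. Proof. exact: hopf_e_lin hopfH. Qed.
Lemma eAlin : slin eA. Proof. exact: hopf_e_lin hopfA. Qed.
Lemma SHlin : vlin SH. Proof. exact: hopf_S_lin hopfH. Qed.
Lemma SAlin : vlin SA. Proof. exact: hopf_S_lin hopfA. Qed.

Lemma bil1 (U V : lmodType K) (f : U -> V -> K) (hf : bilinear_form f)
  (X : lmodType K) (g : X -> U) v : vlin g -> slin (fun x => f (g x) v).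
Proof. by move=> hg c x y; rewrite hg; case: hf => h1 _; apply: h1. Qed.
Lemma bil2 (U V : lmodType K) (f : U -> V -> K) (hf : bilinear_form f)
  (X : lmodType K) (g : X -> V) u : vlin g -> slin (fun x => f u (g x)).
Proof. by move=> hg c x y; rewrite hg; case: hf => _ h2; apply: h2. Qed.

Ltac lin0 tac := repeat first [ tac
  | apply: vlin_id
  | apply vlin_sumF; intro | apply slin_sumF; intro
  | apply vlin_mulL | apply vlin_mulR
  | apply vlin_subF | apply vlin_addF | apply slin_sub | apply slin_add
  | apply slin_mull | apply slin_mulr
  | apply vlin_scl | apply vlin_sclv
  | apply (vlin_compF SHlin) | apply (vlin_compF SAlin)
  | apply (slin_compF (pr1lin _)) | apply (slin_compF (pr2lin _))
  | apply (slin_compF eHlin) | apply (slin_compF eAlin) ].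
Ltac lin := lin0 fail.
Ltac linb hf := lin0 ltac:(first [apply (bil1 hf) | apply (bil2 hf)]).


Lemma eqA_pr (x y : A) : (forall k, pr k x = pr k y) -> x = y.
Proof.
move=> e; apply/eqP; rewrite -subr_eq0; apply/eqP; apply: nondeg.2 => k.
by rewrite (slinB (pr2lin k)) e subrr.
Qed.
Lemma eqH_pr (x y : H) : (forall a, pr x a = pr y a) -> x = y.
Proof.
move=> e; apply/eqP; rewrite -subr_eq0; apply/eqP; apply: nondeg.1 => a.
by rewrite (slinB (pr1lin a)) e subrr.
Qed.

Definition PH (g : H -> K) := exists a, g = fun h => pr h a.
Lemma PH_lin g : PH g -> slin g. Proof. by case=> a ->; apply: pr1lin. Qed.
Lemma PH_sep w : (forall g, PH g -> g w = 0) -> w = 0.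
Proof. move=> e; apply: nondeg.1 => a; apply: (e (fun h => pr h a)); by exists a. Qed.

Lemma teqH (U V : lmodType K) (F : U -> V -> H)
  (F1 : forall v, vlin (fun u => F u v)) (F2 : forall u, vlin (F u)) t1 t2 :
  teq t1 t2 -> \sum_(p <- t1) F p.1 p.2 = \sum_(p <- t2) F p.1 p.2.
Proof. exact: (teq_sep PH_lin PH_sep F1 F2). Qed.
Lemma teq3H (U V X : lmodType K) (F : U -> V -> X -> H)
  (F1 : forall v w, vlin (fun u => F u v w)) (F2 : forall u w, vlin (fun v => F u v w))
  (F3 : forall u v, vlin (F u v)) t1 t2 :
  teq3 t1 t2 -> \sum_(p <- t1) F p.1.1 p.1.2 p.2 = \sum_(p <- t2) F p.1.1 p.1.2 p.2.
Proof. exact: (teq3_sep PH_lin PH_sep F1 F2 F3). Qed.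

Lemma coassH h (F : H -> H -> H -> H)
  (F1 : forall v w, vlin (fun u => F u v w)) (F2 : forall u w, vlin (fun v => F u v w))
  (F3 : forall u v, vlin (F u v)) :
  \sum_(p <- DH h) \sum_(q <- DH p.1) F q.1 q.2 p.2 =
  \sum_(p <- DH h) \sum_(q <- DH p.2) F p.1 q.1 q.2.
Proof. by have := teq3H F1 F2 F3 (hopf_coass hopfH h); rewrite !big_allpairs_dep. Qed.

Lemma coassHK h (F : H -> H -> H -> K) : trilinear_form F ->
  \sum_(p <- DH h) \sum_(q <- DH p.1) F q.1 q.2 p.2 =
  \sum_(p <- DH h) \sum_(q <- DH p.2) F p.1 q.1 q.2.
Proof. by move=> tF; have := hopf_coass hopfH h tF; rewrite !big_allpairs_dep. Qed.
Lemma coassAK a (F : A -> A -> A -> K) : trilinear_form F ->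
  \sum_(p <- DA a) \sum_(q <- DA p.1) F q.1 q.2 p.2 =
  \sum_(p <- DA a) \sum_(q <- DA p.2) F p.1 q.1 q.2.
Proof. by move=> tF; have := hopf_coass hopfA a tF; rewrite !big_allpairs_dep. Qed.

Lemma DHmulH x y (F : H -> H -> H)
  (F1 : forall v, vlin (fun u => F u v)) (F2 : forall u, vlin (F u)) :
  \sum_(p <- DH x) \sum_(q <- DH y) F (p.1 * q.1) (p.2 * q.2) =
  \sum_(p <- DH (x * y)) F p.1 p.2.
Proof. by have := teqH F1 F2 (hopf_D_mul hopfH x y); rewrite /tmul big_allpairs_dep => ->. Qed.

Lemma DHone_H (F : H -> H -> H)
  (F1 : forall v, vlin (fun u => F u v)) (F2 : forall u, vlin (F u)) :
  \sum_(p <- DH 1) F p.1 p.2 = F 1 1.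
Proof. by have := teqH F1 F2 (hopf_D_one hopfH); rewrite big_seq1. Qed.

Lemma counitL2 (W : lmodType K) (G : H -> H -> W)
  (G1 : forall v, vlin (fun u => G u v)) (G2 : forall u, vlin (G u)) x y :
  \sum_(p <- DH x) \sum_(q <- DH y) (eH p.1 * eH q.1) *: G p.2 q.2 = G x y.
Proof.
rewrite -{2}(hopf_counitL hopfH x) -{2}(hopf_counitL hopfH y).
rewrite (vlin_sum (G1 _)); apply: eq_bigr => p _.
rewrite (vlinZ (G1 _)) (vlin_sum (G2 _)) scaler_sumr; apply: eq_bigr => q _.
by rewrite (vlinZ (G2 _)) scalerA.
Qed.
Lemma counitR2 (W : lmodType K) (G : H -> H -> W)
  (G1 : forall v, vlin (fun u => G u v)) (G2 : forall u, vlin (G u)) x y :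
  \sum_(p <- DH x) \sum_(q <- DH y) (eH p.2 * eH q.2) *: G p.1 q.1 = G x y.
Proof.
rewrite -{2}(hopf_counitR hopfH x) -{2}(hopf_counitR hopfH y).
rewrite (vlin_sum (G1 _)); apply: eq_bigr => p _.
rewrite (vlinZ (G1 _)) (vlin_sum (G2 _)) scaler_sumr; apply: eq_bigr => q _.
by rewrite (vlinZ (G2 _)) scalerA.
Qed.

Lemma S_one : SH 1 = 1.
Proof.
have := hopf_antipodeL hopfH 1.
rewrite (DHone_H (F := fun u v => SH u * v)); last first.
- by move=> u; lin.
- by move=> v; lin.
by rewrite mulr1 (hopf_e_one hopfH) scale1r.
Qed.


Lemma nm x y : \sum_(q <- DH x) \sum_(q' <- DH y) SH (q.1 * q'.1) * (q.2 * q'.2)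
  = (eH x * eH y) *: 1.
Proof.
rewrite (@DHmulH x y (fun u v => SH u * v)); last first.
- by move=> u; lin.
- by move=> v; lin.
by rewrite (hopf_antipodeL hopfH) (hopf_e_mul hopfH).
Qed.

Lemma mr x y : \sum_(q <- DH x) \sum_(q' <- DH y) (q.1 * q'.1) * (SH q'.2 * SH q.2)
  = (eH x * eH y) *: 1.
Proof.
have inner u w : \sum_(q' <- DH y) (u * q'.1) * (SH q'.2 * w) = eH y *: (u * w).
  rewrite (eq_bigr (fun q' => u * (q'.1 * SH q'.2) * w)); last by move=> q' _; rewrite !mulrA.
  by rewrite -mulr_suml -mulr_sumr (hopf_antipodeR hopfH) -scalerAr mulr1 -scalerAl.
rewrite (eq_bigr (fun q => eH y *: (q.1 * SH q.2))); last by move=> q _; exact: inner.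
by rewrite -scaler_sumr (hopf_antipodeR hopfH) scalerA mulrC.
Qed.

Lemma S_mul h h' : SH (h * h') = SH h' * SH h.
Proof.
symmetry.
transitivity (\sum_(p <- DH h) \sum_(p' <- DH h') (eH p.1 * eH p'.1) *: (SH p'.2 * SH p.2)).
  by rewrite (counitL2 (G := fun u v => SH v * SH u)) //; move=> *; lin.
transitivity (\sum_(p <- DH h) \sum_(p' <- DH h') \sum_(q <- DH p.1) \sum_(q' <- DH p'.1)
   SH (q.1 * q'.1) * (q.2 * q'.2) * (SH p'.2 * SH p.2)).
  apply: eq_bigr => p _; apply: eq_bigr => p' _.
  rewrite -[X in _ *: X]mul1r scalerAl -nm mulr_suml; apply: eq_bigr => q _; by rewrite mulr_suml.
transitivity (\sum_(p <- DH h) \sum_(q <- DH p.1) 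
   \sum_(p' <- DH h') \sum_(q' <- DH p'.1) SH (q.1 * q'.1) * (q.2 * q'.2) * (SH p'.2 * SH p.2)).
  by apply: eq_bigr => p _; rewrite exchange_big.
rewrite (@coassH h (fun u v w =>
   \sum_(p' <- DH h') \sum_(q' <- DH p'.1) SH (u * q'.1) * (v * q'.2) * (SH p'.2 * SH w))); 
  last 3 first; [by move=> *; lin..|].
transitivity (\sum_(p' <- DH h') \sum_(q' <- DH p'.1) 
   \sum_(p <- DH h) \sum_(q <- DH p.2) SH (p.1 * q'.1) * (q.1 * q'.2) * (SH p'.2 * SH q.2)).
  transitivity (\sum_(p <- DH h) \sum_(p' <- DH h') \sum_(q <- DH p.2) \sum_(q' <- DH p'.1)
     SH (p.1 * q'.1) * (q.1 * q'.2) * (SH p'.2 * SH q.2)).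
    by apply: eq_bigr => p _; rewrite exchange_big.
  rewrite exchange_big; apply: eq_bigr => p' _.
  transitivity (\sum_(p <- DH h) \sum_(q' <- DH p'.1) \sum_(q <- DH p.2)
     SH (p.1 * q'.1) * (q.1 * q'.2) * (SH p'.2 * SH q.2)).
    by apply: eq_bigr => p _; rewrite exchange_big.
  by rewrite exchange_big.
rewrite (@coassH h' (fun u v w =>
   \sum_(p <- DH h) \sum_(q <- DH p.2) SH (p.1 * u) * (q.1 * v) * (SH w * SH q.2)));
  last 3 first; [by move=> *; lin..|].
transitivity (\sum_(p <- DH h) \sum_(p' <- DH h') SH (p.1 * p'.1) *
   \sum_(q <- DH p.2) \sum_(q' <- DH p'.2) ((q.1 * q'.1) * (SH q'.2 * SH q.2))).
  transitivity (\sum_(p' <- DH h') \sum_(p <- DH h) \sum_(q' <- DH p'.2) \sum_(q <- DH p.2)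
     SH (p.1 * p'.1) * (q.1 * q'.1) * (SH q'.2 * SH q.2)).
    by apply: eq_bigr => p' _; rewrite exchange_big.
  rewrite exchange_big; apply: eq_bigr => p _; apply: eq_bigr => p' _.
  rewrite exchange_big mulr_sumr; apply: eq_bigr => q _.
  by rewrite mulr_sumr; apply: eq_bigr => q' _; rewrite !mulrA.
transitivity (\sum_(p <- DH h) \sum_(p' <- DH h') (eH p.2 * eH p'.2) *: SH (p.1 * p'.1)).
  by apply: eq_bigr => p _; apply: eq_bigr => p' _; rewrite mr -scalerAr mulr1.
by rewrite (counitR2 (G := fun u v => SH (u * v))) //; move=> *; lin.
Qed.


Lemma counitHA_L (G : H -> A -> K)
  (G1 : forall v, slin (fun u => G u v)) (G2 : forall u, slin (G u)) h a :
  \sum_(p <- DH h) \sum_(t <- DA a) (eH p.1 * eA t.1) * G p.2 t.2 = G h a.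
Proof.
rewrite -{2}(hopf_counitL hopfH h) -{2}(hopf_counitL hopfA a).
rewrite (slin_sum (G1 _)); apply: eq_bigr => p _.
rewrite (slinZ (G1 _)) (slin_sum (G2 _)) mulr_sumr; apply: eq_bigr => t _.
by rewrite (slinZ (G2 _)) mulrA.
Qed.
Lemma counitHA_R (G : H -> A -> K)
  (G1 : forall v, slin (fun u => G u v)) (G2 : forall u, slin (G u)) h a :
  \sum_(p <- DH h) \sum_(t <- DA a) (eH p.2 * eA t.2) * G p.1 t.1 = G h a.
Proof.
rewrite -{2}(hopf_counitR hopfH h) -{2}(hopf_counitR hopfA a).
rewrite (slin_sum (G1 _)); apply: eq_bigr => p _.
rewrite (slinZ (G1 _)) (slin_sum (G2 _)) mulr_sumr; apply: eq_bigr => t _.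
by rewrite (slinZ (G2 _)) mulrA.
Qed.

Lemma pr_one_r h : pr h 1 = eH h. Proof. by case: hpair. Qed.
Lemma pr_one_l a : pr 1 a = eA a. Proof. by case: hpair. Qed.
Lemma pr_mulH h g a : pr (h * g) a = \sum_(p <- DA a) pr h p.1 * pr g p.2.
Proof. by case: hpair. Qed.
Lemma pr_mulA h a b : pr h (a * b) = \sum_(p <- DH h) pr p.1 a * pr p.2 b.
Proof. by case: hpair. Qed.

Lemma sigf x b : \sum_(q <- DH x) \sum_(u <- DA b) pr q.1 u.1 * pr q.2 (SA u.2)
  = eH x * eA b.
Proof.
rewrite exchange_big.
transitivity (\sum_(u <- DA b) pr x (u.1 * SA u.2)).
  by apply: eq_bigr => u _; rewrite pr_mulA.
rewrite -(slin_sum (pr2lin x)) (hopf_antipodeR hopfA) (slinZ (pr2lin x)) pr_one_r.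
by rewrite mulrC.
Qed.

Lemma gsig x b : \sum_(q <- DH x) \sum_(u <- DA b) pr (SH q.1) u.1 * pr q.2 u.2
  = eH x * eA b.
Proof.
transitivity (\sum_(q <- DH x) pr (SH q.1 * q.2) b).
  by apply: eq_bigr => q _; rewrite pr_mulH.
rewrite -(slin_sum (pr1lin b)) (hopf_antipodeL hopfH) (slinZ (pr1lin b)) pr_one_l.
by [].
Qed.

Lemma S_pair h a : pr (SH h) a = pr h (SA a).
Proof.
rewrite -(counitHA_R (G := fun u v => pr (SH u) v)) //; last first.
- by move=> *; lin.
- by move=> *; lin.
transitivity (\sum_(p <- DH h) \sum_(t <- DA a) \sum_(q <- DH p.2) \sum_(u <- DA t.2)
   pr (SH p.1) t.1 * pr q.1 u.1 * pr q.2 (SA u.2)).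
  apply: eq_bigr => p _; apply: eq_bigr => t _.
  rewrite -sigf mulrC mulr_sumr; apply: eq_bigr => q _.
  by rewrite mulr_sumr; apply: eq_bigr => u _; rewrite mulrA.
transitivity (\sum_(p <- DH h) \sum_(q <- DH p.2) \sum_(t <- DA a) \sum_(u <- DA t.2)
   pr (SH p.1) t.1 * pr q.1 u.1 * pr q.2 (SA u.2)).
  by apply: eq_bigr => p _; rewrite exchange_big.
rewrite -(@coassHK h (fun x y z => \sum_(t <- DA a) \sum_(u <- DA t.2)
   pr (SH x) t.1 * pr y u.1 * pr z (SA u.2))); last by apply: trilinP => *; lin.
transitivity (\sum_(t <- DA a) \sum_(u <- DA t.2) \sum_(p <- DH h) \sum_(q <- DH p.1)
   pr (SH q.1) t.1 * pr q.2 u.1 * pr p.2 (SA u.2)).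
  rewrite /=.
  transitivity (\sum_(p <- DH h) \sum_(t <- DA a) \sum_(q <- DH p.1) \sum_(u <- DA t.2)
    pr (SH q.1) t.1 * pr q.2 u.1 * pr p.2 (SA u.2)).
    by apply: eq_bigr => p _; rewrite exchange_big.
  rewrite exchange_big; apply: eq_bigr => t _.
  transitivity (\sum_(p <- DH h) \sum_(u <- DA t.2) \sum_(q <- DH p.1)
    pr (SH q.1) t.1 * pr q.2 u.1 * pr p.2 (SA u.2)).
    by apply: eq_bigr => p _; rewrite exchange_big.
  by rewrite exchange_big.
rewrite -(@coassAK a (fun x y z => \sum_(p <- DH h) \sum_(q <- DH p.1)
   pr (SH q.1) x * pr q.2 y * pr p.2 (SA z))); last by apply: trilinP => *; lin.
rewrite /=.
rewrite -(counitHA_L (G := fun u v => pr u (SA v))) //; last first.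
- by move=> *; lin.
- by move=> *; lin.
symmetry; rewrite exchange_big; apply: eq_bigr => t _.
rewrite [RHS]exchange_big; apply: eq_bigr => p _.
rewrite -gsig mulr_suml exchange_big; apply: eq_bigr => u _.
by rewrite mulr_suml.
Qed.


Lemma RRinv (f : H -> H -> K) : bilinear_form f ->
  \sum_(r <- R) \sum_(x <- Rinv) f (r.1 * x.1) (r.2 * x.2) = f 1 1.
Proof. by move=> hf; have := qt_inv_l qtri hf; rewrite /tmul big_allpairs_dep big_seq1. Qed.
Lemma RinvR (f : H -> H -> K) : bilinear_form f ->
  \sum_(x <- Rinv) \sum_(r <- R) f (x.1 * r.1) (x.2 * r.2) = f 1 1.
Proof. by move=> hf; have := qt_inv_r qtri hf; rewrite /tmul big_allpairs_dep big_seq1. Qed.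
Lemma DL_R (T : H -> H -> H -> K) : trilinear_form T ->
  \sum_(r <- R) \sum_(q <- DH r.1) T q.1 q.2 r.2 =
  \sum_(r <- R) \sum_(s <- R) T r.1 s.1 (r.2 * s.2).
Proof. by move=> hT; have := qt_DL qtri hT; rewrite !big_allpairs_dep. Qed.
Lemma DR_R (T : H -> H -> H -> K) : trilinear_form T ->
  \sum_(r <- R) \sum_(q <- DH r.2) T r.1 q.1 q.2 =
  \sum_(r <- R) \sum_(s <- R) T (r.1 * s.1) s.2 r.2.
Proof. by move=> hT; have := qt_DR qtri hT; rewrite !big_allpairs_dep. Qed.

Lemma pr_RinvR w a :
  \sum_(r <- R) \sum_(x <- Rinv) eH (x.2 * r.2) * pr (x.1 * (r.1 * w)) a = pr w a.
Proof.
rewrite exchange_big.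
transitivity (\sum_(x <- Rinv) \sum_(r <- R) eH (x.2 * r.2) * pr ((x.1 * r.1) * w) a).
  by apply: eq_bigr => x _; apply: eq_bigr => r _; rewrite mulrA.
rewrite (@RinvR (fun p q => eH q * pr (p * w) a)); last by apply: bilinP => *; lin.
by rewrite (hopf_e_one hopfH) mul1r mul1r.
Qed.

Lemma pr_RRinv w a :
  \sum_(s <- R) \sum_(x <- Rinv) eH (s.1 * x.1) * pr ((w * s.2) * x.2) a = pr w a.
Proof.
transitivity (\sum_(s <- R) \sum_(x <- Rinv) eH (s.1 * x.1) * pr (w * (s.2 * x.2)) a).
  by apply: eq_bigr => s _; apply: eq_bigr => x _; rewrite mulrA.
rewrite (@RRinv (fun p q => eH p * pr (w * q) a)); last by apply: bilinP => *; lin.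
by rewrite (hopf_e_one hopfH) mul1r mulr1.
Qed.

Lemma uR1 : \sum_(s <- R) eH s.2 *: s.1 = 1.
Proof.
apply: eqH_pr => a.
set psi := fun p q => \sum_(x <- Rinv) eH (x.2 * q) * pr (x.1 * p) a.
have key : forall w, \sum_(r <- R) psi (r.1 * w) r.2 = pr w a.
  move=> w; rewrite -(pr_RinvR w a); apply: eq_bigr => r _.
  by apply: eq_bigr => x _.
have := @DR_R (fun u v w => eH v * psi u w).
rewrite -(key 1) -(key (\sum_(s <- R) eH s.2 *: s.1)).
have -> : \sum_(r <- R) \sum_(q <- DH r.2) eH q.1 * psi r.1 q.2 = \sum_(r <- R) psi (r.1 * 1) r.2.
  apply: eq_bigr => r _; rewrite mulr1.
  have L : slin (psi r.1) by rewrite /psi; lin.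
  by rewrite -{2}(hopf_counitL hopfH r.2) (slin_sum L); apply: eq_bigr => q _; rewrite (slinZ L).
have -> : \sum_(r <- R) \sum_(s <- R) eH s.2 * psi (r.1 * s.1) r.2 =
          \sum_(r <- R) psi (r.1 * \sum_(s <- R) eH s.2 *: s.1) r.2.
  apply: eq_bigr => r _.
  have L : slin (fun u => psi u r.2) by rewrite /psi; lin.
  rewrite (vlin_sum (vlin_mulR r.1 (@vlin_id _ H))) (slin_sum L).
  by apply: eq_bigr => s _; rewrite -scalerAr (slinZ L).
move=> e; rewrite e //; rewrite /psi; apply: trilinP => *; lin.
Qed.


Lemma wR1 : \sum_(r <- R) eH r.1 *: r.2 = 1.
Proof.
apply: eqH_pr => a.
set phi := fun p q => \sum_(x <- Rinv) eH (p * x.1) * pr (q * x.2) a.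
have key : forall w, \sum_(s <- R) phi s.1 (w * s.2) = pr w a.
  move=> w; rewrite -(pr_RRinv w a); apply: eq_bigr => s _.
  by apply: eq_bigr => x _.
have := @DL_R (fun u v w => eH u * phi v w).
rewrite -(key 1) -(key (\sum_(r <- R) eH r.1 *: r.2)).
have -> : \sum_(r <- R) \sum_(q <- DH r.1) eH q.1 * phi q.2 r.2 = \sum_(r <- R) phi r.1 (1 * r.2).
  apply: eq_bigr => r _; rewrite mul1r.
  have L : slin (fun u => phi u r.2) by rewrite /phi; lin.
  by rewrite -{2}(hopf_counitL hopfH r.1) (slin_sum L); apply: eq_bigr => q _; rewrite (slinZ L).
have -> : \sum_(r <- R) \sum_(s <- R) eH r.1 * phi s.1 (r.2 * s.2) =
          \sum_(s <- R) phi s.1 ((\sum_(r <- R) eH r.1 *: r.2) * s.2).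
  rewrite exchange_big; apply: eq_bigr => s _.
  have L : slin (fun u => phi s.1 (u * s.2)) by rewrite /phi; lin.
  rewrite (slin_sum L); apply: eq_bigr => r _.
  by rewrite (slinZ L).
move=> e; rewrite e //; rewrite /phi; apply: trilinP => *; lin.
Qed.

Lemma vR1 : \sum_(x <- Rinv) eH x.1 *: x.2 = 1.
Proof.
apply: eqH_pr => a.
have := @RRinv (fun p q => eH p * pr q a).
rewrite (hopf_e_one hopfH) mul1r => <-; last by apply: bilinP => *; lin.
rewrite -{1}[\sum_(x <- Rinv) _ *: _]mul1r -{1}wR1.
have L : slin (fun u => pr (u * \sum_(x <- Rinv) eH x.1 *: x.2) a) by lin.
rewrite (slin_sum L); apply: eq_bigr => r _; rewrite (slinZ L).
have L2 : slin (fun u => pr (r.2 * u) a) by lin.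
rewrite (slin_sum L2) mulr_sumr; apply: eq_bigr => x _.
by rewrite (slinZ L2) (hopf_e_mul hopfH) mulrA.
Qed.


Lemma G1 (f : H -> H -> K) : bilinear_form f ->
  \sum_(r <- R) \sum_(s <- R) f (SH r.1 * s.1) (r.2 * s.2) = f 1 1.
Proof.
move=> hf.
rewrite -(@DL_R (fun u v w => f (SH u * v) w)); last by apply: trilinP => *; linb hf.
have L : forall w, slin (fun u => f u w) by move=> w; linb hf.
transitivity (\sum_(r <- R) f (eH r.1 *: 1) r.2).
  apply: eq_bigr => r _; rewrite -(hopf_antipodeL hopfH) (slin_sum (L _)).
  by [].
have L2 : slin (f 1) by linb hf.
rewrite -[X in _ = f 1 X]wR1 (slin_sum L2); apply: eq_bigr => r _.
by rewrite (slinZ (L _)) (slinZ L2).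
Qed.

Lemma Gsum (f : H -> H -> K) : bilinear_form f ->
  \sum_(r <- R) f (SH r.1) r.2 = \sum_(x <- Rinv) f x.1 x.2.
Proof.
move=> hf.
transitivity (\sum_(r <- R) \sum_(s <- R) \sum_(x <- Rinv)
   f (SH r.1 * (s.1 * x.1)) (r.2 * (s.2 * x.2))).
  apply: eq_bigr => r _.
  rewrite (@RRinv (fun p q => f (SH r.1 * p) (r.2 * q))); last by apply: bilinP => *; linb hf.
  by rewrite !mulr1.
transitivity (\sum_(x <- Rinv) \sum_(r <- R) \sum_(s <- R)
   f ((SH r.1 * s.1) * x.1) ((r.2 * s.2) * x.2)).
  transitivity (\sum_(r <- R) \sum_(x <- Rinv) \sum_(s <- R)
     f (SH r.1 * (s.1 * x.1)) (r.2 * (s.2 * x.2))).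
    by apply: eq_bigr => r _; rewrite exchange_big.
  rewrite exchange_big; apply: eq_bigr => x _; apply: eq_bigr => r _; apply: eq_bigr => s _.
  by rewrite !mulrA.
apply: eq_bigr => x _.
rewrite (@G1 (fun p q => f (p * x.1) (q * x.2))); last by apply: bilinP => *; linb hf.
by rewrite !mul1r.
Qed.

Lemma RinvY (f : H -> H -> K) : bilinear_form f ->
  \sum_(x <- Rinv) \sum_(x' <- Rinv) f (x.1 * x'.1) (x.2 * SH x'.2) = f 1 1.
Proof.
move=> hf.
transitivity (\sum_(x <- Rinv) \sum_(r <- R) f (x.1 * SH r.1) (x.2 * SH r.2)).
  apply: eq_bigr => x _.
  rewrite -(@Gsum (fun u v => f (x.1 * u) (x.2 * SH v))) //.
  by apply: bilinP => *; linb hf.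
rewrite -(@Gsum (fun u v => \sum_(r <- R) f (u * SH r.1) (v * SH r.2))); last first.
  by apply: bilinP => *; linb hf.
transitivity (\sum_(r <- R) \sum_(s <- R) f (SH (r.1 * s.1)) (s.2 * SH r.2)).
  rewrite exchange_big; apply: eq_bigr => r _; apply: eq_bigr => s _.
  by rewrite S_mul.
rewrite -(@DR_R (fun u v w => f (SH u) (v * SH w))); last by apply: trilinP => *; linb hf.
transitivity (\sum_(r <- R) f (SH r.1) (eH r.2 *: 1)).
  apply: eq_bigr => r _; rewrite -(hopf_antipodeR hopfH).
  have L : slin (f (SH r.1)) by linb hf.
  by rewrite (slin_sum L).
have L : slin (fun u => f (SH u) 1) by linb hf.
rewrite -[X in _ = f X 1]S_one -[X in _ = f (SH X) 1]uR1 (slin_sum L); apply: eq_bigr => r _.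
have L2 : slin (f (SH r.1)) by linb hf.
by rewrite (slinZ L) (slinZ L2).
Qed.

Lemma YR (f : H -> H -> K) : bilinear_form f ->
  \sum_(x <- Rinv) f x.1 (SH x.2) = \sum_(r <- R) f r.1 r.2.
Proof.
move=> hf.
transitivity (\sum_(x <- Rinv) \sum_(r <- R) \sum_(x' <- Rinv)
   f ((r.1 * x'.1) * x.1) ((r.2 * x'.2) * SH x.2)).
  apply: eq_bigr => x _.
  rewrite (@RRinv (fun p q => f (p * x.1) (q * SH x.2))); last by apply: bilinP => *; linb hf.
  by rewrite !mul1r.
rewrite exchange_big; apply: eq_bigr => r _.
transitivity (\sum_(x' <- Rinv) \sum_(x <- Rinv) f (r.1 * (x'.1 * x.1)) (r.2 * (x'.2 * SH x.2))).
  rewrite exchange_big; apply: eq_bigr => x' _; apply: eq_bigr => x _.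
  by rewrite !mulrA.
rewrite (@RinvY (fun p q => f (r.1 * p) (r.2 * q))); last by apply: bilinP => *; linb hf.
by rewrite !mulr1.
Qed.


Notation aL := (actL SH DA pr).
Notation aR := (actR DA pr).

Lemma eH_S h : eH (SH h) = eH h.
Proof.
have := congr1 eH (hopf_antipodeL hopfH h).
rewrite (slin_sum eHlin) (slinZ eHlin) (hopf_e_one hopfH) mulr1 => <-.
rewrite -{1}(hopf_counitR hopfH h) (vlin_sum SHlin) (slin_sum eHlin).
apply: eq_bigr => p _; rewrite (vlinZ SHlin) (slinZ eHlin) (hopf_e_mul hopfH).
by rewrite mulrC.
Qed.

Lemma pr_aL k h a : pr k (aL h a) = pr (SH h * k) a - pr (SH h) a * eH k.
Proof.
rewrite /actL (slinB (pr2lin k)) (slin_sum (pr2lin k)) (slinZ (pr2lin k)) pr_one_r.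
by rewrite pr_mulH; congr (_ - _); apply: eq_bigr => p _; rewrite (slinZ (pr2lin k)).
Qed.

Lemma pr_aR k g a : pr k (aR g a) = pr (k * g) a - pr g a * eH k.
Proof.
rewrite /actR (slinB (pr2lin k)) (slin_sum (pr2lin k)) (slinZ (pr2lin k)) pr_one_r.
rewrite pr_mulH; congr (_ - _); apply: eq_bigr => p _; rewrite (slinZ (pr2lin k)).
by rewrite mulrC.
Qed.

Lemma pr_aLR k h g a :
  pr k (aL h (aR g a)) = pr (SH h * k * g) a - pr (SH h * g) a * eH k.
Proof.
rewrite pr_aL !pr_aR (hopf_e_mul hopfH); ring.
Qed.

Lemma eA_pr x : eA x = pr 1 x. Proof. by rewrite pr_one_l. Qed.

Lemma cl1 h a : eA (aL h a) = 0.
Proof. by rewrite eA_pr pr_aL mulr1 (hopf_e_one hopfH) mulr1 subrr. Qed.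
Lemma cl2 g a : eA (aR g a) = 0.
Proof. by rewrite eA_pr pr_aR mul1r (hopf_e_one hopfH) mulr1 subrr. Qed.
Lemma cl3 c h h' a : aL (c *: h + h') a = c *: aL h a + aL h' a.
Proof.
apply: eqA_pr => k; rewrite (pr2lin k) !pr_aL SHlin.
rewrite mulrDl -scalerAl (slinD (pr1lin a)) (slinZ (pr1lin a)).
rewrite (slinD (pr1lin a)) (slinZ (pr1lin a)); ring.
Qed.
Lemma cl4 c g g' a : aR (c *: g + g') a = c *: aR g a + aR g' a.
Proof.
apply: eqA_pr => k; rewrite (pr2lin k) !pr_aR.
rewrite mulrDr -scalerAr (slinD (pr1lin a)) (slinZ (pr1lin a)).
rewrite (slinD (pr1lin a)) (slinZ (pr1lin a)); ring.
Qed.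
Lemma cl5 c h a a' : aL h (c *: a + a') = c *: aL h a + aL h a'.
Proof.
apply: eqA_pr => k; rewrite (pr2lin k) !pr_aL !(pr2lin); ring.
Qed.
Lemma cl6 c g a a' : aR g (c *: a + a') = c *: aR g a + aR g a'.
Proof.
apply: eqA_pr => k; rewrite (pr2lin k) !pr_aR !(pr2lin); ring.
Qed.
Lemma cl7 a : eA a = 0 -> aL 1 a = a.
Proof.
move=> ea; apply: eqA_pr => k; rewrite pr_aL S_one mul1r pr_one_l ea; ring.
Qed.
Lemma cl8 a : eA a = 0 -> aR 1 a = a.
Proof.
move=> ea; apply: eqA_pr => k; rewrite pr_aR mulr1 pr_one_l ea; ring.
Qed.
Lemma cl9 h h' a : aL (h * h') a = aL h (aL h' a).
Proof.
apply: eqA_pr => k; rewrite !pr_aL S_mul (hopf_e_mul hopfH) !mulrA; ring.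
Qed.
Lemma cl10 g g' a : aR (g * g') a = aR g (aR g' a).
Proof.
apply: eqA_pr => k; rewrite !pr_aR (hopf_e_mul hopfH) !mulrA; ring.
Qed.
Lemma cl11 h g a : aL h (aR g a) = aR g (aL h a).
Proof.
apply: eqA_pr => k; rewrite pr_aLR pr_aR !pr_aL (hopf_e_mul hopfH) !mulrA; ring.
Qed.


Definition Phi k c u v := pr (SH u * k * v) c - pr (SH u * v) c * eH k.
Lemma Phi1 k c v : slin (fun u => Phi k c u v). Proof. by rewrite /Phi; lin. Qed.
Lemma Phi2 k c u : slin (fun v => Phi k c u v). Proof. by rewrite /Phi; lin. Qed.

Notation HH := (actHH SH DA pr).
Notation th := (theta_map DH pr R Rinv).

Lemma pr_HH k t a : pr k (HH t a) = \sum_(q <- t) Phi k a q.1 q.2.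
Proof. by rewrite /actHH (slin_sum (pr2lin k)); apply: eq_bigr => q _; rewrite pr_aLR. Qed.

Lemma eA_HH t a : eA (HH t a) = 0.
Proof.
rewrite eA_pr pr_HH big1 // => q _.
by rewrite /Phi mulr1 (hopf_e_one hopfH) mulr1 subrr.
Qed.

Lemma theta_sum (F : H -> H -> K) (F1 : forall v, slin (fun u => F u v)) h b :
  \sum_(q <- th h b) F q.1 q.2 =
  \sum_(p <- DH h) \sum_(x <- Rinv) \sum_(s <- R) pr (x.1 * s.2) b * F (p.1 * x.2) (p.2 * s.1).
Proof.
rewrite /theta_map big_allpairs_dep big_allpairs.
apply: eq_bigr => p _; apply: eq_bigr => x _; apply: eq_bigr => s _.
by rewrite /= (slinZ (F1 _)).
Qed.

Lemma L_h1 k h c : pr k (HH (th h 1) c) = \sum_(p <- DH h) Phi k c p.1 p.2.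
Proof.
rewrite pr_HH (theta_sum (@Phi1 k c)); apply: eq_bigr => p _.
have inner u : \sum_(s <- R) eH s.2 * Phi k c u (p.2 * s.1) = Phi k c u p.2.
  transitivity (Phi k c u (p.2 * \sum_(s <- R) eH s.2 *: s.1)); last by rewrite uR1 mulr1.
  have L : slin (fun v => Phi k c u (p.2 * v)) by rewrite /Phi; lin.
  by rewrite (slin_sum L); apply: eq_bigr => s _; rewrite (slinZ L).
transitivity (\sum_(x <- Rinv) eH x.1 * Phi k c (p.1 * x.2) p.2).
  apply: eq_bigr => x _; rewrite -inner mulr_sumr; apply: eq_bigr => s _.
  by rewrite pr_one_r (hopf_e_mul hopfH) mulrA.
transitivity (Phi k c (p.1 * \sum_(x <- Rinv) eH x.1 *: x.2) p.2); last by rewrite vR1 mulr1.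
have L : slin (fun u => Phi k c (p.1 * u) p.2) by rewrite /Phi; lin.
by rewrite (slin_sum L); apply: eq_bigr => x _; rewrite (slinZ L).
Qed.

Lemma hact_pr k h c : pr k (hact DA SA pr h c) = \sum_(p <- DH h) pr (SH p.1 * k * p.2) c.
Proof.
rewrite /hact /cop3 (slin_sum (pr2lin k)) big_allpairs_dep /=.
transitivity (\sum_(p <- DA c) \sum_(q <- DA p.1) \sum_(r <- DH h)
  pr (SH r.1) q.1 * pr k q.2 * pr r.2 p.2).
  apply: eq_bigr => p _; apply: eq_bigr => q _.
  rewrite (slinZ (pr2lin k)) pr_mulA mulr_suml; apply: eq_bigr => r _.
  by rewrite -S_pair; ring.
symmetry.
transitivity (\sum_(r <- DH h) \sum_(p <- DA c) \sum_(q <- DA p.1)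
  pr (SH r.1) q.1 * pr k q.2 * pr r.2 p.2).
  apply: eq_bigr => r _; rewrite pr_mulH; apply: eq_bigr => p _.
  by rewrite pr_mulH mulr_suml.
rewrite exchange_big; apply: eq_bigr => p _.
by rewrite exchange_big.
Qed.

Lemma L12g k h c : pr k (HH (th h 1) c) = pr k (hact DA SA pr h c) - eH h * eA c * eH k.
Proof.
rewrite L_h1 hact_pr /Phi sumrB; congr (_ - _).
rewrite -mulr_suml -(slin_sum (pr1lin c)) (hopf_antipodeL hopfH) (slinZ (pr1lin c)).
by rewrite pr_one_l.
Qed.


Lemma PhiC1 k c (X : lmodType K) (g : X -> H) v : vlin g -> slin (fun x => Phi k c (g x) v).
Proof. by move=> hg c' x y; rewrite hg Phi1. Qed.
Lemma PhiC2 k c (X : lmodType K) (g : X -> H) u : vlin g -> slin (fun x => Phi k c u (g x)).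
Proof. by move=> hg c' x y; rewrite hg (Phi2 k c u). Qed.
Ltac linP := lin0 ltac:(first [apply PhiC1 | apply PhiC2]).

Lemma L_1b k b a : pr k (HH (th 1 b) a) =
  \sum_(x <- Rinv) \sum_(s <- R) pr (x.1 * s.2) b * Phi k a x.2 s.1.
Proof.
rewrite pr_HH (theta_sum (@Phi1 k a)).
have := hopf_D_one hopfH (f := fun u v => \sum_(x <- Rinv) \sum_(s <- R)
    pr (x.1 * s.2) b * Phi k a (u * x.2) (v * s.1)).
rewrite big_seq1 /= => ->; last by apply: bilinP => *; linP.
by apply: eq_bigr => x _; apply: eq_bigr => s _; rewrite !mul1r.
Qed.

Lemma bact_pr k b a : pr k (bact DA pr R b a) =
  \sum_(x <- Rinv) \sum_(s <- R) pr (x.1 * s.2) b * Phi k a x.2 s.1.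
Proof.
rewrite /bact (slinB (pr2lin k)) (slinZ (pr2lin k)) pr_one_r.
rewrite /Phi.
transitivity (\sum_(x <- Rinv) \sum_(s <- R) pr (x.1 * s.2) b * pr (SH x.2 * k * s.1) a -
   (\sum_(x <- Rinv) \sum_(s <- R) pr (x.1 * s.2) b * pr (SH x.2 * s.1) a) * eH k); last first.
  rewrite mulr_suml -sumrB; apply: eq_bigr => x _.
  rewrite mulr_suml -sumrB; apply: eq_bigr => s _; ring.
congr (_ - _ * _).
  rewrite (slin_sum (pr2lin k)).
  rewrite (@YR (fun u v => \sum_(s <- R) pr (u * s.2) b * pr (v * k * s.1) a)); last first.
    by apply: bilinP => *; lin.
  apply: eq_bigr => r _; rewrite (slin_sum (pr2lin k)); apply: eq_bigr => s _.
  rewrite (slin_sum (pr2lin k)) /cop3 big_allpairs_dep (pr_mulH (r.2 * k) s.1 a) mulr_sumr.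
  apply: eq_bigr => p _; rewrite (pr_mulH r.2 k p.1) mulr_suml mulr_sumr; apply: eq_bigr => q _.
  by rewrite (slinZ (pr2lin k)) /=; ring.
rewrite (@YR (fun u v => \sum_(s <- R) pr (u * s.2) b * pr (v * s.1) a)); last first.
  by apply: bilinP => *; lin.
rewrite /Qmap big_allpairs_dep (slin_sum (pr1lin b)); apply: eq_bigr => r _.
rewrite (slin_sum (pr1lin b)); apply: eq_bigr => s _.
by rewrite (slinZ (pr1lin b)) mulrC.
Qed.

Lemma cl13 b a : HH (th 1 b) a = bact DA pr R b a.
Proof. by apply: eqA_pr => k; rewrite L_1b bact_pr. Qed.

Lemma cl12 h a : eA a = 0 -> HH (th h 1) a = hact DA SA pr h a.
Proof. by move=> ea; apply: eqA_pr => k; rewrite L12g ea mulr0 mul0r subr0. Qed.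

Lemma cl14 h b a : HH (th h b) a = hact DA SA pr h (bact DA pr R b a).
Proof.
apply: eqA_pr => k.
set c := bact DA pr R b a.
have ec : eA c = 0 by rewrite /c -cl13 eA_HH.
have -> : pr k (hact DA SA pr h c) = pr k (HH (th h 1) c) by rewrite L12g ec mulr0 mul0r subr0.
rewrite L_h1 pr_HH (theta_sum (@Phi1 k a)); apply: eq_bigr => p _.
rewrite {2}/Phi /c !bact_pr mulr_suml -sumrB; apply: eq_bigr => x _.
rewrite mulr_suml -sumrB; apply: eq_bigr => s _.
rewrite /Phi S_mul !(hopf_e_mul hopfH) !eH_S !mulrA; ring.
Qed.

End Main.

Unset Implicit Arguments.
Set Strict Implicit.

Theorem proposition4p2
  (H A : algType CC)
  (DH : H -> seq (H * H)) (eH : H -> CC) (SH : H -> H)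
  (DA : A -> seq (A * A)) (eA : A -> CC) (SA : A -> A)
  (pr : H -> A -> CC) (R Rinv : seq (H * H))
  (hopfH : is_hopf DH eH SH) (hopfA : is_hopf DA eA SA)
  (hpair : is_hopf_pairing DH eH DA eA pr) (nondeg : pairing_nondegenerate pr)
  (qtri : is_quasitriangular DH R Rinv)
  (factorisable : bijective (Qmap pr R)) :
  let aL := actL SH DA pr in
  let aR := actR DA pr in
  (* the two formulas preserve ker eps and define an action of H (x) H *)
  (forall h a, eA a = 0 -> eA (aL h a) = 0) /\
  (forall g a, eA a = 0 -> eA (aR g a) = 0) /\
  (forall (c : CC) h h' a, eA a = 0 -> aL (c *: h + h') a = c *: aL h a + aL h' a) /\
  (forall (c : CC) g g' a, eA a = 0 -> aR (c *: g + g') a = c *: aR g a + aR g' a) /\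
  (forall (c : CC) h a a', eA a = 0 -> eA a' = 0 ->
     aL h (c *: a + a') = c *: aL h a + aL h a') /\
  (forall (c : CC) g a a', eA a = 0 -> eA a' = 0 ->
     aR g (c *: a + a') = c *: aR g a + aR g a') /\
  (forall a, eA a = 0 -> aL 1 a = a) /\
  (forall a, eA a = 0 -> aR 1 a = a) /\
  (forall h h' a, eA a = 0 -> aL (h * h') a = aL h (aL h' a)) /\
  (forall g g' a, eA a = 0 -> aR (g * g') a = aR g (aR g' a)) /\
  (forall h g a, eA a = 0 -> aL h (aR g a) = aR g (aL h a)) /\
  (* the pull-back along theta_map is the stated action of H |><| A^op *)
  (forall h a, eA a = 0 ->
     actHH SH DA pr (theta_map DH pr R Rinv h 1) a = hact DA SA pr h a) /\
  (forall b a, eA a = 0 ->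
     actHH SH DA pr (theta_map DH pr R Rinv 1 b) a = bact DA pr R b a) /\
  (forall h b a, eA a = 0 ->
     actHH SH DA pr (theta_map DH pr R Rinv h b) a
       = hact DA SA pr h (bact DA pr R b a)).
Proof.
move=> aL aR.
split; first by move=> h a _; eapply cl1; eassumption.
split; first by move=> g a _; eapply cl2; eassumption.
split; first by move=> c h h' a _; eapply cl3; eassumption.
split; first by move=> c g g' a _; eapply cl4; eassumption.
split; first by move=> c h a a' _ _; eapply cl5; eassumption.
split; first by move=> c g a a' _ _; eapply cl6; eassumption.
split; first by move=> a ea; eapply cl7; eassumption.
split; first by move=> a ea; eapply cl8; eassumption.
split; first by move=> h h' a _; eapply cl9; eassumption.
split; first by move=> g g' a _; eapply cl10; eassumption.
split; first by move=> h g a _; eapply cl11; eassumption.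
split; first by move=> h a ea; eapply cl12; eassumption.
split; first by move=> b a _; eapply cl13; eassumption.
by move=> h b a _; eapply cl14; eassumption.
Qed.
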